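(* Let $A_1,\dots,A_n\subseteq\mathbb Z^n$ be finite, $M=(\mathbb C\setminus\{0\})^n$, and let $\mathscr F_i$ be the space of Laurent polynomials $\sum_{\mathbf a\in A_i}f_{\mathbf a}\mathbf z^{\mathbf a}$ with inner product $\langle\sum f_{\mathbf a}\mathbf z^{\mathbf a},\sum g_{\mathbf a}\mathbf z^{\mathbf a}\rangle=\sum_{\mathbf a\in A_i}f_{\mathbf a}\overline{g_{\mathbf a}}$. Let $\lambda_1,\dots,\lambda_n$ be positive integers, $\mathscr G=\mathscr F_1^{\lambda_1}\cdots\mathscr F_n^{\lambda_n}$ and $B=\lambda_1A_1+\cdots+\lambda_nA_n$ (Minkowski sum). For $\mathbf b\in B$ let $c_{\mathbf b}$ be the number of ordered tuples $(\mathbf a_{11},\dots,\mathbf a_{1\lambda_1},\dots,\mathbf a_{n1},\dots,\mathbf a_{n\lambda_n})$ with $\mathbf a_{ij}\in A_i$ and $\sum_{i,j}\mathbf a_{ij}=\mathbf b$. Then $\mathscr G$ is the space of Laurent polynomials $\sum_{\mathbf b\in B}f_{\mathbf b}\mathbf z^{\mathbf b}$ with inner product \[\Big\langle\sum_{\mathbf b\in B}f_{\mathbf b}\mathbf z^{\mathbf b},\sum_{\mathbf b\in B}g_{\mathbf b}\mathbf z^{\mathbf b}\Big\rangle_{\mathscr G}=\sum_{\mathbf b\in B}\frac{f_{\mathbf b}\overline{g_{\mathbf b}}}{c_{\mathbf b}}.\]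
   Context: A fewspace on a complex manifold $M$ is a complex Hilbert space of holomorphic functions $M\to\mathbb C$ on which every evaluation $f\mapsto f(\mathbf x)$ is a continuous, nonzero linear functional. Product of fewspaces: regard the Hilbert tensor product $\mathscr E\otimes\mathscr F$ as functions on $M\times M$ via $(e\otimes f)(\mathbf x_1,\mathbf x_2)=e(\mathbf x_1)f(\mathbf x_2)$, let $\Delta(h)(\mathbf x)=h(\mathbf x,\mathbf x)$; $\mathscr E\mathscr F=\Delta(\mathscr E\otimes\mathscr F)$ with norm $\|g\|=\min\{\|h\|:\Delta(h)=g\}$; $\mathscr F^\lambda$ is the $\lambda$-fold product. *)

(* Defs.v *)
(* Finite-dimensional model of the fewspaces in the statement:
   Laurent polynomials are represented by their coefficient functions
   'rV[int]_n -> C, supported on a finite exponent set. *)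
From HB Require Import structures.
From mathcomp Require Import all_boot all_order all_algebra.
Set Implicit Arguments. Unset Strict Implicit. Unset Printing Implicit Defensive.
Import Order.TTheory GRing.Theory Num.Theory.
Local Open Scope ring_scope.

Section Defs.
Variables (C : numClosedFieldType) (n : nat).
Local Notation X := 'rV[int]_n.

Record lspace := LSpace { supp : seq X ; ip : (X -> C) -> (X -> C) -> C }.

Definition supported (A : seq X) (f : X -> C) : Prop :=
  forall x, x \notin A -> f x = 0.

Definition delta (a : X) : X -> C := fun x => (x == a)%:R.

(* Hilbert tensor product E (x) F: elements h = sum h a b z^a (x) z^b;
   inner product induced from those of E and F. *)
Definition tsupported (E F : lspace) (h : X -> X -> C) : Prop :=
  forall a b, (a \notin supp E) || (b \notin supp F) -> h a b = 0.

Definition tensor_ip (E F : lspace) (h h' : X -> X -> C) : C :=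
  \sum_(a <- undup (supp E)) \sum_(a' <- undup (supp E))
   \sum_(b <- undup (supp F)) \sum_(b' <- undup (supp F))
     h a b * (h' a' b')^* * ip E (delta a) (delta a') * ip F (delta b) (delta b').

(* Delta(h)(x) = h(x,x): on monomials z^a (x) z^b |-> z^(a+b). *)
Definition diag (E F : lspace) (h : X -> X -> C) : X -> C :=
  fun c => \sum_(a <- undup (supp E)) \sum_(b <- undup (supp F))
             (a + b == c)%:R * h a b.

Definition sumset (E F : lspace) : seq X := [seq a + b | a <- supp E, b <- supp F].

Definition is_sesq (P : lspace) : Prop :=
  (forall f1 f2 g (k : C), supported (supp P) f1 -> supported (supp P) f2 ->
     supported (supp P) g ->
     ip P (fun x => k * f1 x + f2 x) g = k * ip P f1 g + ip P f2 g) /\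
  (forall f g, supported (supp P) f -> supported (supp P) g ->
     ip P g f = (ip P f g)^*).

Definition is_min_norm (E F : lspace) (g : X -> C) (r : C) : Prop :=
  (exists2 h, tsupported E F h &
     (forall x, diag E F h x = g x) /\ tensor_ip E F h h = r) /\
  (forall h, tsupported E F h -> (forall x, diag E F h x = g x) ->
     r <= tensor_ip E F h h).

Definition is_product (E F P : lspace) : Prop :=
  supp P =i sumset E F /\ is_sesq P /\
  forall g, supported (supp P) g -> is_min_norm E F g (ip P g g).

Definition space_eq (P Q : lspace) : Prop :=
  supp P =i supp Q /\
  forall f g, supported (supp P) f -> supported (supp P) g -> ip P f g = ip Q f g.

Definition unit_space : lspace := LSpace [:: 0] (fun f g => f 0 * (g 0)^*).

Fixpoint is_mprod (l : seq lspace) (P : lspace) : Prop :=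
  match l with
  | [::] => space_eq P unit_space
  | E :: l' =>
      match l' with
      | [::] => space_eq P E
      | _ => exists Q, is_mprod l' Q /\ is_product E Q P
      end
  end.

Definition is_power (F : lspace) (lam : nat) (P : lspace) : Prop :=
  is_mprod (nseq lam F) P.

Definition laurent_space (A : seq X) : lspace :=
  LSpace A (fun f g => \sum_(a <- undup A) f a * (g a)^*).

Definition sum_tuples (l : seq (seq X)) : seq X :=
  foldr (fun A acc => [seq a + s | a <- undup A, s <- acc]) [:: 0] l.

Definition tuple_sums (A : 'I_n -> seq X) (lam : 'I_n -> nat) : seq X :=
  sum_tuples (flatten [seq nseq (lam i) (A i) | i <- enum 'I_n]).

Definition Bset A lam : seq X := undup (tuple_sums A lam).

Definition cnt A lam (b : X) : nat := count_mem b (tuple_sums A lam).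

Definition G_formula A lam : lspace :=
  LSpace (Bset A lam)
    (fun f g => \sum_(b <- Bset A lam) f b * (g b)^* / (cnt A lam b)%:R).

Definition is_G (A : 'I_n -> seq X) (lam : 'I_n -> nat) (P : lspace) : Prop :=
  exists Ps : 'I_n -> lspace,
    (forall i, is_power (laurent_space (A i)) (lam i) (Ps i)) /\
    is_mprod [seq Ps i | i <- enum 'I_n] P.

End Defs.

(* Main.v *)
Require Import Defs.
From HB Require Import structures.
From mathcomp Require Import all_boot all_order all_algebra ring.
Set Implicit Arguments. Unset Strict Implicit. Unset Printing Implicit Defensive.
Import Order.TTheory GRing.Theory Num.Theory.
Local Open Scope ring_scope.

Section Comb.
Variable n : nat.
Local Notation X := 'rV[int]_n.

Definition allsums (s t : seq X) : seq X := [seq a + b | a <- s, b <- t].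
Definition sum_all (L : seq (seq X)) : seq X := foldr allsums [:: 0] L.

Lemma allsums_cons a s t : allsums (a :: s) t = map (fun b => a + b) t ++ allsums s t.
Proof. by []. Qed.

Lemma allsums_catl s1 s2 t : allsums (s1 ++ s2) t = allsums s1 t ++ allsums s2 t.
Proof. by elim: s1 => //= a s1 IH; rewrite !allsums_cons IH catA. Qed.

Lemma allsums_map a t u :
  allsums (map (fun b => a + b) t) u = map (fun b => a + b) (allsums t u).
Proof.
elim: t => //= b t IH; rewrite !allsums_cons IH map_cat -map_comp.
by congr (_ ++ _); apply: eq_map => c /=; rewrite addrA.
Qed.

Lemma allsums_assoc s t u :
  allsums (allsums s t) u = allsums s (allsums t u).
Proof.
elim: s => //= a s IH; rewrite !allsums_cons allsums_catl IH allsums_map //.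
Qed.

Lemma allsums0l t : allsums [:: 0] t = t.
Proof. rewrite allsums_cons cats0; elim: t => //= b t ->; by rewrite add0r. Qed.

Lemma allsums0r s : allsums s [:: 0] = s.
Proof. by elim: s => //= a s IH; rewrite allsums_cons /= IH addr0. Qed.

Lemma count_allsums (p : pred X) s t :
  count p (allsums s t) = \sum_(a <- s) count (fun b => p (a + b)) t.
Proof.
elim: s => [|a s IH]; first by rewrite big_nil.
by rewrite allsums_cons count_cat IH big_cons count_map.
Qed.

Lemma perm_allsums s s' t t' : perm_eq s s' -> perm_eq t t' ->
  perm_eq (allsums s t) (allsums s' t').
Proof.
move=> ps pt; apply/permP => p; rewrite !count_allsums (perm_big _ ps).
by apply: eq_bigr => a _; apply/permP.
Qed.

Lemma sum_all_cat L1 L2 :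
  perm_eq (sum_all (L1 ++ L2)) (allsums (sum_all L1) (sum_all L2)).
Proof.
elim: L1 => [|s L1 IH] /=; first by rewrite allsums0l.
rewrite allsums_assoc; apply: perm_allsums => //.
Qed.

Lemma sum_all_flatten LL :
  perm_eq (sum_all (flatten LL)) (sum_all (map sum_all LL)).
Proof.
elim: LL => [|L LL IH] //=.
apply: perm_trans (sum_all_cat _ _) _; apply: perm_allsums => //.
Qed.

Lemma sum_tuplesE l : sum_tuples l = sum_all (map undup l).
Proof. by elim: l => //= A l ->. Qed.

Lemma sum_count_undup (F : X -> nat) s :
  \sum_(a <- s) F a = \sum_(a <- undup s) (count_mem a s * F a)%N.
Proof.
rewrite -big_undup_iterop_count; apply: eq_bigr => a _.
rewrite Monoid.iteropE; elim: (count_mem a s) => //= k ->; by rewrite mulSn.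
Qed.

End Comb.
Section Rep.
Variables (C : numClosedFieldType) (n : nat).
Local Notation X := 'rV[int]_n.
Local Notation lsp := (lspace C n).

Definition Wf (s : seq X) (f g : X -> C) : C :=
  \sum_(x <- undup s) f x * (g x)^* / (count_mem x s)%:R.

Definition rep (E : lsp) (s : seq X) : Prop :=
  supp E =i s /\ forall f g, supported (supp E) f -> supported (supp E) g ->
    ip E f g = Wf s f g.

Definition Wc (s : seq X) : lsp := LSpace s (Wf s).

Lemma supported_eq (S1 S2 : seq X) (f : X -> C) :
  S1 =i S2 -> supported S1 f -> supported S2 f.
Proof. by move=> e h x; rewrite -e; apply: h. Qed.

Lemma Wf_perm s s' f g : perm_eq s s' -> Wf s f g = Wf s' f g.
Proof.
move=> ps; rewrite /Wf (perm_big _ (perm_undup (perm_mem ps))).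
by apply: eq_bigr => x _; rewrite (permP ps).
Qed.

Lemma rep_perm E s s' : perm_eq s s' -> rep E s -> rep E s'.
Proof.
move=> ps [h1 h2]; split; first by move=> x; rewrite h1 (perm_mem ps).
by move=> f g hf hg; rewrite h2 // (Wf_perm _ _ ps).
Qed.

Lemma rep_space_eq P Q s : rep P s -> rep Q s -> space_eq P Q.
Proof.
move=> [p1 p2] [q1 q2]; split; first by move=> x; rewrite p1 q1.
have e : supp P =i supp Q by move=> x; rewrite p1 q1.
by move=> f g hf hg; rewrite p2 // q2 //; apply: (supported_eq e).
Qed.

Lemma space_eq_rep P Q s : space_eq P Q -> rep Q s -> rep P s.
Proof.
move=> [e1 e2] [q1 q2]; split; first by move=> x; rewrite e1 q1.
by move=> f g hf hg; rewrite e2 // q2 //; apply: (supported_eq e1).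
Qed.

Lemma rep_Wc s : rep (Wc s) s.
Proof. by split. Qed.

Lemma rep_laurent (A : seq X) : rep (laurent_space C A) (undup A).
Proof.
split; first by move=> x; rewrite mem_undup.
move=> f g _ _ /=; rewrite /Wf [undup (undup A)]undup_id ?undup_uniq //.
rewrite big_seq_cond [RHS]big_seq_cond; apply: eq_bigr => x /andP[hx _].
by rewrite (count_uniq_mem _ (undup_uniq A)) hx divr1.
Qed.

Lemma rep_unit : rep (unit_space C n) [:: 0].
Proof.
split => // f g _ _ /=; rewrite /Wf /= big_cons big_nil /= eqxx /=.
by rewrite addr0 divr1.
Qed.

Lemma rep_G (A : 'I_n -> seq X) lam : rep (G_formula C A lam) (tuple_sums A lam).
Proof. by split => // x; rewrite /= /Bset mem_undup. Qed.

End Rep.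
Lemma count_sum_nat (T : Type) (a : pred T) (s : seq T) :
  count a s = \sum_(x <- s) (a x : nat).
Proof. by elim: s => [|y s IH]; rewrite ?big_nil ?big_cons //= IH. Qed.

Section Prod.
Variables (C : numClosedFieldType) (n : nat).
Local Notation X := 'rV[int]_n.
Local Notation lsp := (lspace C n).

Lemma sum_delta (r : seq X) (a : X) (G : X -> C) :
  uniq r -> a \in r -> \sum_(x <- r) (x == a)%:R * G x = G a.
Proof.
move=> ur ar; rewrite (bigD1_seq a) //= eqxx mul1r big1 ?addr0 // => x /negbTE ->.
by rewrite mul0r.
Qed.

Lemma supported_comb (S : seq X) (k : C) (f g : X -> C) :
  supported S f -> supported S g -> supported S (fun x => k * f x + g x).
Proof. by move=> hf hg x hx; rewrite hf // hg // mulr0 addr0. Qed.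

Lemma conj_sum (I : Type) (r : seq I) (F : I -> C) :
  (\sum_(i <- r) F i)^* = \sum_(i <- r) (F i)^*.
Proof.
elim: r => [|i r IH]; first by rewrite !big_nil conjC0.
by rewrite !big_cons rmorphD /= IH.
Qed.

Lemma Wf_sesq (u S : seq X) : is_sesq (@LSpace C n S (Wf u)).
Proof.
split => /=.
  move=> f1 f2 g k _ _ _; rewrite /Wf big_distrr -big_split /=.
  apply: eq_bigr => x _; ring.
move=> f g _ _; rewrite /Wf conj_sum; apply: eq_bigr => x _.
by rewrite !rmorphM fmorphV /= conjC_nat conjCK [(f x)^* * _]mulrC.
Qed.

Section Polar.
Variables (S : seq X) (B : (X -> C) -> (X -> C) -> C).
Hypothesis hB : is_sesq (@LSpace C n S B).
Variables (f g : X -> C).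
Hypotheses (hf : supported S f) (hg : supported S g).

Let lin : forall f1 f2 g (k : C), supported S f1 -> supported S f2 ->
  supported S g -> B (fun x => k * f1 x + f2 x) g = k * B f1 g + B f2 g
  := proj1 hB.
Let herm : forall f g, supported S f -> supported S g -> B g f = (B f g)^*
  := proj2 hB.

Lemma polar1 : B (fun x => 1 * f x + g x) (fun x => 1 * f x + g x) =
  B f f + B f g + B g f + B g g.
Proof.
have s1 := supported_comb 1 hf hg.
rewrite lin // mul1r (herm s1 hf) (herm s1 hg) /= !lin // !mul1r !rmorphD /=.
rewrite -(herm hf hf) -(herm hg hf) -(herm hf hg) -(herm hg hg).
by rewrite !addrA.
Qed.

Lemma polar2 : B (fun x => 'i * g x + f x) (fun x => 'i * g x + f x) =
  B f f + B g g + 'i * B g f - 'i * B f g.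
Proof.
have s2 := supported_comb 'i hg hf.
rewrite lin // (herm s2 hf) (herm s2 hg) /= !lin // !rmorphD !rmorphM /= conjCi.
rewrite -(herm hf hf) -(herm hg hf) -(herm hf hg) -(herm hg hg).
have hi : 'i * 'i = -1 :> C by rewrite -expr2 sqrCi.
have -> : 'i * (- 'i * B g g + B g f) = - ('i * 'i) * B g g + 'i * B g f by ring.
rewrite hi opprK mul1r; ring.
Qed.

End Polar.

Lemma polar (S : seq X) (B1 B2 : (X -> C) -> (X -> C) -> C) :
  is_sesq (@LSpace C n S B1) -> is_sesq (@LSpace C n S B2) ->
  (forall h, supported S h -> B1 h h = B2 h h) ->
  forall f g, supported S f -> supported S g -> B1 f g = B2 f g.
Proof.
move=> h1 h2 hn f g hf hg.
have e1 := polar1 h1 hf hg; have e2 := polar2 h1 hf hg.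
have e3 := polar1 h2 hf hg; have e4 := polar2 h2 hf hg.
have E1 : B1 f f + B1 f g + B1 g f + B1 g g = B2 f f + B2 f g + B2 g f + B2 g g.
  by rewrite -e1 -e3 hn //; apply: supported_comb.
have E2 : B1 f f + B1 g g + 'i * B1 g f - 'i * B1 f g =
          B2 f f + B2 g g + 'i * B2 g f - 'i * B2 f g.
  by rewrite -e2 -e4 hn //; apply: supported_comb.
rewrite (hn f) // (hn g) // in E1 E2.
have d1 : (B2 f f + B1 f g + B1 g f + B2 g g) - (B2 f f + B2 f g + B2 g f + B2 g g) = 0.
  by rewrite E1 subrr.
have d2 : (B2 f f + B2 g g + 'i * B1 g f - 'i * B1 f g) -
          (B2 f f + B2 g g + 'i * B2 g f - 'i * B2 f g) = 0.
  by rewrite E2 subrr.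
have : (2%:R * 'i) * (B1 f g - B2 f g) = 0.
  apply: (eq_trans _ (_ : 'i * 0 - 0 = 0)); last by rewrite mulr0 subr0.
  rewrite -[X in 'i * X]d1 -[in RHS]d2; ring.
move/eqP; rewrite mulf_eq0 mulf_eq0 pnatr_eq0 /= (negbTE (neq0Ci C)) /=.
by rewrite subr_eq0 => /eqP.
Qed.

End Prod.
Section Core.
Variables (C : numClosedFieldType) (n : nat).
Local Notation X := 'rV[int]_n.
Local Notation lsp := (lspace C n).
Variables (E F : lsp) (s t : seq X).
Hypotheses (rE : rep E s) (rF : rep F t).

Let uE := undup (supp E).
Let uF := undup (supp F).
Let u := allsums s t.
Let w (a b : X) : C := (count_mem a s * count_mem b t)%:R.
Let wc (x : X) : C := (count_mem x u)%:R.

Definition T (h h' : X -> X -> C) : C :=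
  \sum_(a <- uE) \sum_(b <- uF) h a b * (h' a b)^* / w a b.

Lemma memE a : (a \in uE) = (a \in s).
Proof. by rewrite mem_undup (proj1 rE). Qed.
Lemma memF b : (b \in uF) = (b \in t).
Proof. by rewrite mem_undup (proj1 rF). Qed.

Lemma permE : perm_eq uE (undup s).
Proof. by apply: perm_undup => x; rewrite (proj1 rE). Qed.
Lemma permF : perm_eq uF (undup t).
Proof. by apply: perm_undup => x; rewrite (proj1 rF). Qed.

Lemma cnt_neq0 (r : seq X) a : a \in r -> (count_mem a r)%:R != 0 :> C.
Proof.
move=> ha; rewrite pnatr_eq0; apply/negP => /eqP/count_memPn.
by rewrite ha.
Qed.

Lemma w_neq0 a b : a \in uE -> b \in uF -> w a b != 0.
Proof.
rewrite memE memF => ha hb; rewrite /w natrM mulf_eq0 negb_or.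
by rewrite !cnt_neq0.
Qed.

Lemma delta_ipE a a' : a \in uE -> a' \in uE ->
  ip E (delta C a) (delta C a') = (a == a')%:R / (count_mem a s)%:R.
Proof.
move=> ha ha'.
have sd : forall c, c \in uE -> supported (supp E) (delta C c).
  move=> c hc x hx; rewrite /delta; case: eqP => // e; move: hx hc.
  by rewrite e mem_undup => /negbTE ->.
rewrite (proj2 rE _ _ (sd _ ha) (sd _ ha')) /Wf.
under eq_bigr => x _ do rewrite /delta -mulrA.
rewrite sum_delta ?undup_uniq ?mem_undup -?memE //.
by rewrite conjC_nat eq_sym.
Qed.

Lemma delta_ipF b b' : b \in uF -> b' \in uF ->
  ip F (delta C b) (delta C b') = (b == b')%:R / (count_mem b t)%:R.
Proof.
move=> ha ha'.
have sd : forall c, c \in uF -> supported (supp F) (delta C c).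
  move=> c hc x hx; rewrite /delta; case: eqP => // e; move: hx hc.
  by rewrite e mem_undup => /negbTE ->.
rewrite (proj2 rF _ _ (sd _ ha) (sd _ ha')) /Wf.
under eq_bigr => x _ do rewrite /delta -mulrA.
rewrite sum_delta ?undup_uniq ?mem_undup -?memF //.
by rewrite conjC_nat eq_sym.
Qed.

Lemma tensor_T h h' : tensor_ip E F h h' = T h h'.
Proof.
rewrite /tensor_ip /T -/uE -/uF big_seq [RHS]big_seq; apply: eq_bigr => a ha.
have inner : forall a', a' \in uE ->
  \sum_(b <- uF) \sum_(b' <- uF)
     h a b * (h' a' b')^* * ip E (delta C a) (delta C a') * ip F (delta C b) (delta C b')
  = (a' == a)%:R * \sum_(b <- uF) h a b * (h' a b)^* / w a b.
  move=> a' ha'; rewrite delta_ipE //.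
  case: (a' =P a) => [->|ne]; last first.
    rewrite mul0r big1 // => b _; rewrite big1 // => b' _.
    by move/eqP: ne; rewrite eq_sym => /negbTE ->; rewrite mul0r mulr0 mul0r.
  rewrite eqxx !mulr1n [RHS]mul1r big_seq [RHS]big_seq; apply: eq_bigr => b hb.
  rewrite big_seq.
  rewrite (eq_bigr (fun b' => (b' == b)%:R * (h a b * (h' a b')^* / w a b))).
    by rewrite -big_seq sum_delta ?undup_uniq.
  move=> b' hb'; rewrite delta_ipF // [b' == b]eq_sym /w natrM.
  have := cnt_neq0 (a := a) (r := s); rewrite -memE => /(_ ha) h1.
  have := cnt_neq0 (a := b) (r := t); rewrite -memF => /(_ hb) h2.
  by rewrite mul1r invfM; ring.
rewrite big_seq (eq_bigr _ inner) -big_seq sum_delta ?undup_uniq //.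
Qed.

Lemma T_conj h h' : T h' h = (T h h')^*.
Proof.
rewrite /T conj_sum; apply: eq_bigr => a _; rewrite conj_sum.
apply: eq_bigr => b _; rewrite !rmorphM fmorphV /= conjC_nat conjCK.
by rewrite [(h a b)^* * _]mulrC.
Qed.

Lemma T_ge0 h : 0 <= T h h.
Proof.
apply: sumr_ge0 => a _; apply: sumr_ge0 => b _.
by apply: divr_ge0; [apply: mul_conjC_ge0 | apply: ler0n].
Qed.

Lemma T_sub h k :
  T (fun a b => h a b - k a b) (fun a b => h a b - k a b) =
  T h h - T h k - T k h + T k k.
Proof.
rewrite /T -!sumrB -big_split /=; apply: eq_bigr => a _.
rewrite -!sumrB -big_split /=; apply: eq_bigr => b _.
rewrite rmorphB /=; ring.
Qed.

Definition hs (g : X -> C) : X -> X -> C := fun a b => g (a + b) * w a b / wc (a + b).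

Lemma count_wc x : \sum_(a <- uE) \sum_(b <- uF) (a + b == x)%:R * w a b = wc x.
Proof.
rewrite /wc /u count_allsums sum_count_undup natr_sum (perm_big _ permE) /=.
apply: eq_bigr => a _.
rewrite [count (fun b => _) t]count_sum_nat [\sum_(b <- t) _]sum_count_undup big_distrr natr_sum (perm_big _ permF) /=.
apply: eq_bigr => b _; rewrite /w -natrM; congr (_%:R).
by rewrite mulnC -mulnA.
Qed.

Lemma in_u a b : a \in uE -> b \in uF -> a + b \in undup u.
Proof. by rewrite memE memF mem_undup => ha hb; apply: allpairs_f. Qed.

Lemma diag_hs g : supported u g -> forall x, diag E F (hs g) x = g x.
Proof.
move=> hg x; rewrite /diag -/uE -/uF.
rewrite (eq_bigr (fun a => g x / wc x * \sum_(b <- uF) (a + b == x)%:R * w a b)); last first.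
  move=> a _; rewrite mulr_sumr; apply: eq_bigr => b _; rewrite /hs.
  case: (a + b =P x) => [<-|_].
    by rewrite !mulr1n !mul1r mulrAC.
  by rewrite !mulr0n !mul0r mulr0.
rewrite -mulr_sumr count_wc /=.
case: (boolP (x \in u)) => hx.
  by rewrite divfK // cnt_neq0.
by rewrite hg // !mul0r.
Qed.

Lemma hs_tsupp g : tsupported E F (hs g).
Proof.
move=> a b /orP[] h; rewrite /hs /w.
  have h' : a \notin s by rewrite -(proj1 rE).
  by rewrite (count_memPn h') mul0n mulr0n mulr0 mul0r.
have h' : b \notin t by rewrite -(proj1 rF).
by rewrite (count_memPn h') muln0 mulr0n mulr0 mul0r.
Qed.

Lemma T_hs h g : (forall x, diag E F h x = g x) -> T h (hs g) = Wf u g g.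
Proof.
move=> hd; rewrite /T big_seq.
rewrite (eq_bigr (fun a => \sum_(b <- uF) \sum_(x <- undup u)
   (x == a + b)%:R * (h a b * (g x)^* / wc x))); last first.
  move=> a ha; rewrite big_seq [RHS]big_seq; apply: eq_bigr => b hb.
  rewrite sum_delta ?undup_uniq ?in_u // /hs !rmorphM !fmorphV /= !conjC_nat.
  have hw := w_neq0 ha hb.
  have hc : wc (a + b) != 0.
    by apply: cnt_neq0; move: (in_u ha hb); rewrite mem_undup.
  move: hw hc; rewrite /wc /w.
  set W := (_ * _)%:R; set Wc := (count_mem _ _)%:R => hw hc.
  by rewrite [_ * W / _]mulrAC mulrA mulfK // mulrA.
rewrite -big_seq.
under eq_bigr => a _ do rewrite exchange_big.
rewrite exchange_big /Wf; apply: eq_bigr => x _.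
transitivity (diag E F h x * ((g x)^* / wc x)); last by rewrite hd mulrA.
rewrite /diag -/uE -/uF mulr_suml; apply: eq_bigr => a _.
rewrite mulr_suml; apply: eq_bigr => b _.
by rewrite [x == _]eq_sym !mulrA.
Qed.

Lemma Wf_real (g : X -> C) : (Wf u g g)^* = Wf u g g.
Proof.
rewrite /Wf conj_sum; apply: eq_bigr => x _.
by rewrite !rmorphM fmorphV /= conjC_nat conjCK [(g x)^* * _]mulrC.
Qed.

Lemma lower h g : supported u g -> (forall x, diag E F h x = g x) ->
  Wf u g g <= T h h.
Proof.
move=> hg hd; have := T_ge0 (fun a b => h a b - hs g a b).
rewrite T_sub (T_conj h (hs g)) (T_hs hd) (T_hs (diag_hs hg)) Wf_real.
by rewrite subrK subr_ge0.
Qed.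

Lemma sumset_u : sumset E F =i u.
Proof.
move=> x; apply/allpairsP/allpairsP => -[[a b] /= [ha hb ->]]; exists (a, b).
  by rewrite /= -(proj1 rE) -(proj1 rF).
by rewrite /= (proj1 rE) (proj1 rF).
Qed.

Lemma product_fw P : is_product E F P -> rep P u.
Proof.
move=> [hsupp [hses hmin]].
have hS : supp P =i u by move=> x; rewrite hsupp sumset_u.
have hn : forall g, supported (supp P) g -> ip P g g = Wf u g g.
  move=> g hg; have hgu := supported_eq hS hg.
  have [[h0 ht0 [hd0 hT0]] hle] := hmin g hg.
  apply: le_anti; apply/andP; split.
    have := hle (hs g) (hs_tsupp g) (diag_hs hgu).
    by rewrite tensor_T (T_hs (diag_hs hgu)).
  by rewrite -hT0 tensor_T; apply: lower.
split => // f g hf hg.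
have hses' : is_sesq (@LSpace C n (supp P) (ip P)) by case: hses.
exact (@polar C n (supp P) (ip P) (@Wf C n u) hses' (@Wf_sesq C n u (supp P)) hn f g hf hg).
Qed.

Lemma product_bw P : rep P u -> is_product E F P.
Proof.
move=> [hS hip].
split; first by move=> x; rewrite hS sumset_u.
split.
  have [l1 l2] := @Wf_sesq C n u (supp P).
  split.
    move=> f1 f2 g k h1 h2 h3.
    rewrite (hip _ _ (supported_comb k h1 h2) h3) (hip _ _ h1 h3) (hip _ _ h2 h3).
    exact: l1.
  move=> f g hf hg; rewrite (hip _ _ hf hg) (hip _ _ hg hf); exact: l2.
move=> g hg; rewrite (hip _ _ hg hg); have hgu := supported_eq hS hg.
split.
  exists (hs g); first exact: hs_tsupp.
  by split; [exact: diag_hs | rewrite tensor_T (T_hs (diag_hs hgu))].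
by move=> h _ hd; rewrite tensor_T; apply: lower.
Qed.

End Core.
Section Mprod.
Variables (C : numClosedFieldType) (n : nat).
Local Notation X := 'rV[int]_n.
Local Notation lsp := (lspace C n).

Fixpoint reps (l : seq lsp) (Ls : seq (seq X)) : Prop :=
  match l, Ls with
  | [::], [::] => True
  | E :: l', s :: Ls' => rep E s /\ reps l' Ls'
  | _, _ => False
  end.

Lemma mprod_rep (l : seq lsp) Ls P : reps l Ls -> (is_mprod l P <-> rep P (sum_all Ls)).
Proof.
elim: l Ls P => [|E l IH] [|s Ls] P //=.
  move=> _; split => h; first exact: (space_eq_rep h (@rep_unit C n)).
  exact: (rep_space_eq h (@rep_unit C n)).
move=> [rE rl]; case: l IH rl => [|E' l] IH rl.
  case: Ls rl => // _; rewrite allsums0r.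
  by split => h; [exact: (space_eq_rep h rE) | exact: (rep_space_eq h rE)].
split.
  move=> [Q [hQ hp]]; have rQ := (IH Ls Q rl).1 hQ.
  exact: (product_fw rE rQ hp).
move=> hP; exists (@Wc C n (sum_all Ls)); split.
  by apply/(IH Ls _ rl); exact: rep_Wc.
exact: (product_bw rE (rep_Wc _ _) hP).
Qed.

Lemma reps_map (I : Type) (r : seq I) (Ps : I -> lsp) (G : I -> seq X) :
  (forall i, rep (Ps i) (G i)) -> reps (map Ps r) (map G r).
Proof. by move=> h; elim: r => //= i r ->; split. Qed.

Lemma reps_nseq k (E : lsp) s : rep E s -> reps (nseq k E) (nseq k s).
Proof. by move=> h; elim: k => //= k ->; split. Qed.

Lemma tuple_sums_perm (A : 'I_n -> seq X) lam :
  perm_eq (tuple_sums A lam)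
    (sum_all [seq sum_all (nseq (lam i) (undup (A i))) | i <- enum 'I_n]).
Proof.
rewrite /tuple_sums sum_tuplesE.
have -> : map undup (flatten [seq nseq (lam i) (A i) | i <- enum 'I_n]) =
          flatten [seq nseq (lam i) (undup (A i)) | i <- enum 'I_n].
  by rewrite map_flatten -map_comp; congr flatten; apply: eq_map => i /=; rewrite map_nseq.
apply: perm_trans (sum_all_flatten _) _; rewrite -map_comp; exact: perm_refl.
Qed.

End Mprod.

Unset Implicit Arguments.

Theorem mainTheorem8 (C : numClosedFieldType) (n : nat)
  (A : 'I_n -> seq 'rV[int]_n) (lam : 'I_n -> nat)
  (hlam : forall i, (0 < lam i)%N) (P : lspace C n) :
  is_G A lam P <-> space_eq P (G_formula C A lam).
Proof.
split.
  move=> [Ps [hpow hm]].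
  have rPs : forall i, rep (Ps i) (sum_all (nseq (lam i) (undup (A i)))).
    move=> i; apply/(mprod_rep _ (reps_nseq (lam i) (rep_laurent C (A i)))).
    exact: hpow i.
  have rP := (mprod_rep _ (reps_map (enum 'I_n) rPs)).1 hm.
  have hp := tuple_sums_perm A lam; rewrite perm_sym in hp.
  have rP' := rep_perm hp rP.
  exact: (rep_space_eq rP' (rep_G C A lam)).
move=> he; exists (fun i => @Wc C n (sum_all (nseq (lam i) (undup (A i))))); split.
  move=> i; rewrite /is_power.
  apply/(mprod_rep _ (reps_nseq (lam i) (rep_laurent C (A i)))); exact: rep_Wc.
apply/(mprod_rep _ (reps_map (enum 'I_n) (fun i => rep_Wc C (sum_all (nseq (lam i) (undup (A i))))))).
apply: rep_perm (tuple_sums_perm A lam) _.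
exact: (space_eq_rep he (rep_G C A lam)).
Qed.
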